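(* In the setting described in the context, for $n\ge0$ let $\tilde\mu'_{m,n}=\max\{x\in[\min P,d]: f^{m+2n}(x)=d\}$, and for $k\ge1$ let $\tilde\mu_{m,n,k}=\min\{x\in[\tilde\mu'_{m,n},\tilde\mu'_{m,n+1}]: f^{m+2n+2k}(x)=d\}$ (these sets are nonempty). Then for each $n\ge1$ and $k\ge1$, every periodic point of $f$ in $[\tilde\mu'_{m,n},\tilde\mu_{m,n,k}]$ whose least period is odd has least period $\ge m+2n+2k+2$.
   Context: Let $I$ be a compact interval and $f:I\to I$ continuous; $f^1=f$, $f^n=f\circ f^{n-1}$. A point $x_0$ is a periodic point of least period $k$ (a period-$k$ point) if $f^k(x_0)=x_0$ and $f^i(x_0)\ne x_0$ for $0<i<k$. Let $m\ge3$ be odd and let $P$ be a periodic orbit of $f$ of least period $m$. Put $e=f^{m-1}(\min P)$. Let $v\in[\min P,e)$ be a point with $f(v)=e$, and let $z\in(v,e)$ be a fixed point of $f$ (such points exist). Define $z_0=\min\{x\in[v,z]: f^2(x)=x\}$ and $d=\max\{x\in[\min P,v]: f^2(x)=z_0\}$ (both sets are nonempty). *)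

(* Defs.v *)
From Stdlib Require Import Reals Lra Lia.
Open Scope R_scope.

Definition iter (n : nat) (f : R -> R) (x : R) : R := Nat.iter n f x.

Definition least_period (f : R -> R) (k : nat) (x : R) : Prop :=
  (0 < k)%nat /\ iter k f x = x /\
  (forall i : nat, (0 < i < k)%nat -> iter i f x <> x).

Definition is_min (S : R -> Prop) (y : R) : Prop :=
  S y /\ forall x, S x -> y <= x.
Definition is_max (S : R -> Prop) (y : R) : Prop :=
  S y /\ forall x, S x -> x <= y.

Definition cont_on (f : R -> R) (a b : R) : Prop :=
  forall x, a <= x <= b -> forall eps, 0 < eps -> exists delta, 0 < delta /\
    forall y, a <= y <= b -> Rabs (y - x) < delta -> Rabs (f y - f x) < eps.

(* Main.v *)
Require Import Defs.
From Stdlib Require Import Reals Lra Lia.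
Open Scope R_scope.

Lemma cont_sub F a b lo hi : cont_on F a b -> a <= lo -> hi <= b -> cont_on F lo hi.
Proof.
  intros H H1 H2 x Hx eps He. destruct (H x ltac:(lra) eps He) as [dl [Hd Hy]].
  exists dl; split; auto. intros y Hy1 Hy2. apply Hy; auto; lra.
Qed.

Lemma cont_minus_id F lo hi : cont_on F lo hi -> cont_on (fun x => F x - x) lo hi.
Proof.
  intros H x Hx eps He. destruct (H x Hx (eps/2) ltac:(lra)) as [dl [Hd Hy]].
  exists (Rmin dl (eps/2)); split. apply Rmin_pos; lra.
  intros y Hy1 Hy2. pose proof (Rmin_l dl (eps/2)); pose proof (Rmin_r dl (eps/2)).
  specialize (Hy y Hy1 ltac:(lra)).
  replace (F y - y - (F x - x)) with ((F y - F x) - (y - x)) by ring.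
  pose proof (Rabs_triang (F y - F x) (- (y - x))). rewrite Rabs_Ropp in H2.
  unfold Rminus at 1. lra.
Qed.

Lemma clamp_lip lo hi x y : lo <= hi ->
  Rabs (Rmax lo (Rmin hi y) - Rmax lo (Rmin hi x)) <= Rabs (y - x).
Proof.
  intros H. unfold Rmax, Rmin.
  repeat (destruct Rle_dec); unfold Rabs; repeat (destruct Rcase_abs); lra.
Qed.

Lemma clamp_in lo hi x : lo <= hi -> lo <= Rmax lo (Rmin hi x) <= hi.
Proof. intros H. unfold Rmax, Rmin. repeat (destruct Rle_dec); lra. Qed.

Lemma clamp_id lo hi x : lo <= x <= hi -> Rmax lo (Rmin hi x) = x.
Proof. intros H. unfold Rmax, Rmin. repeat (destruct Rle_dec); lra. Qed.

Lemma ivt_on F lo hi c : lo <= hi -> cont_on F lo hi ->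
  (F lo <= c <= F hi) \/ (F hi <= c <= F lo) ->
  exists y, lo <= y <= hi /\ F y = c.
Proof.
  intros Hlh Hc Hv.
  set (G := fun x => F (Rmax lo (Rmin hi x)) - c).
  assert (HG : continuity G).
  { intros x eps He.
    destruct (Hc _ (clamp_in lo hi x Hlh) eps He) as [dl [Hd Hy]].
    exists dl; split; [lra|]. intros x0 [_ Hx0]. simpl in *. unfold R_dist in *.
    unfold G. replace (F (Rmax lo (Rmin hi x0)) - c - (F (Rmax lo (Rmin hi x)) - c))
      with (F (Rmax lo (Rmin hi x0)) - F (Rmax lo (Rmin hi x))) by ring.
    apply Hy. apply clamp_in; auto.
    pose proof (clamp_lip lo hi x x0 Hlh). lra. }
  assert (Hp : G lo * G hi <= 0).
  { unfold G. rewrite (clamp_id lo hi lo) by lra. rewrite (clamp_id lo hi hi) by lra.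
    destruct Hv; nra. }
  destruct (IVT_cor G lo hi HG Hlh Hp) as [y [Hy1 Hy2]].
  exists y; split; auto. unfold G in Hy2. rewrite clamp_id in Hy2 by lra. lra.
Qed.

Lemma iter_S n f x : iter (S n) f x = f (iter n f x).
Proof. reflexivity. Qed.

Lemma iter_add n k f x : iter (n + k) f x = iter n f (iter k f x).
Proof. unfold iter. apply Nat.iter_add. Qed.

Lemma iter_in a b f : (forall x, a <= x <= b -> a <= f x <= b) ->
  forall n x, a <= x <= b -> a <= iter n f x <= b.
Proof.
  intros H n; induction n; intros x Hx. exact Hx. rewrite iter_S. apply H; auto.
Qed.

Lemma cont_iter a b f : (forall x, a <= x <= b -> a <= f x <= b) -> cont_on f a b ->
  forall n, cont_on (iter n f) a b.
Proof.
  intros Hm Hc n; induction n.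
  - intros x Hx eps He. exists eps; split; [exact He|]. intros y _ Hy. exact Hy.
  - intros x Hx eps He.
    destruct (Hc (iter n f x) (iter_in a b f Hm n x Hx) eps He) as [d1 [Hd1 H1]].
    destruct (IHn x Hx d1 Hd1) as [d2 [Hd2 H2]].
    exists d2; split; auto. intros y Hy Hyx. rewrite !iter_S.
    apply H1. apply iter_in; auto. apply H2; auto.
Qed.

Theorem lemma11
  (a b : R) (f : R -> R)
  (Hab : a <= b)
  (Hmaps : forall x, a <= x <= b -> a <= f x <= b)
  (Hcont : cont_on f a b)
  (m : nat) (Hm3 : (3 <= m)%nat) (Hmodd : Nat.odd m = true)
  (p : R) (* p = min P, where P is the orbit of p *)
  (Hp_I : a <= p <= b)
  (Hp_per : least_period f m p)
  (Hp_min : forall i : nat, p <= iter i f p)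
  (v z z0 d : R)
  (Hv : p <= v < iter (m - 1) f p /\ f v = iter (m - 1) f p)
  (Hz : v < z < iter (m - 1) f p /\ f z = z)
  (Hz0 : is_min (fun x => v <= x <= z /\ iter 2 f x = x) z0)
  (Hd : is_max (fun x => p <= x <= v /\ iter 2 f x = z0) d)
  (mu' : nat -> R)
  (Hmu' : forall n : nat,
      is_max (fun x => p <= x <= d /\ iter (m + 2 * n) f x = d) (mu' n))
  (mu : nat -> nat -> R)
  (Hmu : forall n k : nat, (1 <= k)%nat ->
      is_min (fun x => mu' n <= x <= mu' (S n) /\
                       iter (m + 2 * n + 2 * k) f x = d) (mu n k)) :
  forall n k : nat, (1 <= n)%nat -> (1 <= k)%nat ->
  forall (x : R) (q : nat),
    mu' n <= x <= mu n k ->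
    least_period f q x -> Nat.odd q = true ->
    (m + 2 * n + 2 * k + 2 <= q)%nat.
Proof.
  intros n k Hn Hk x q Hx Hq Hqodd.
  pose proof (iter_in a b f Hmaps) as Hin.
  pose proof (cont_iter a b f Hmaps Hcont) as Hci.
  assert (HfE : f (iter (m-1) f p) = p).
  { destruct Hp_per as [_ [Hpm _]]. rewrite <- iter_S.
    replace (S (m-1)) with m by lia. exact Hpm. }
  destruct Hv as [[Hpv HvE] HfvE]. destruct Hz as [[Hvz HzE] Hfz].
  destruct Hz0 as [[[Hvz0 Hz0z] Hz0f2] Hz0min].
  destruct Hd as [[[Hpd Hdv] Hd2] Hdmax].
  assert (HEin : a <= iter (m-1) f p <= b) by (apply Hin; lra).
  assert (Hp_lt_v : p < v).
  { destruct (Rle_lt_or_eq_dec _ _ Hpv) as [|Heq]; auto. exfalso.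
    destruct Hp_per as [_ [_ Hmin]]. apply (Hmin 2%nat ltac:(lia)).
    subst v. change (f (f p) = p). rewrite HfvE. exact HfE. }
  assert (Hf2v : iter 2 f v = p).
  { change (f (f v) = p). rewrite HfvE. exact HfE. }
  assert (Hdlt : d < v).
  { destruct (Rle_lt_or_eq_dec _ _ Hdv) as [|Heq]; auto. exfalso.
    subst d. rewrite Hf2v in Hd2. lra. }
  assert (Hfz0 : z0 <= f z0).
  { destruct (Rle_or_lt z0 (f z0)) as [|Hlt]; auto. exfalso.
    destruct (ivt_on (fun x => f x - x) v z0 0 Hvz0
      (cont_minus_id _ _ _ (cont_sub f a b v z0 Hcont ltac:(lra) ltac:(lra))))
      as [c [Hc1 Hc2]].
    { right. lra. }
    assert (Hfc : f c = c) by lra.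
    assert (Hc2' : iter 2 f c = c) by (change (f (f c) = c); rewrite !Hfc; reflexivity).
    assert (z0 <= c) by (apply Hz0min; split; [lra|exact Hc2']).
    assert (c = z0) by lra. subst c. lra. }
  assert (Hd_even : forall s, iter (2 + 2 * s) f d = z0).
  { induction s. exact Hd2.
    replace (2 + 2 * S s)%nat with (2 + (2 + 2 * s))%nat by lia.
    rewrite iter_add, IHs. exact Hz0f2. }
  assert (Hd_odd : forall s, iter (3 + 2 * s) f d = f z0).
  { intros s. replace (3 + 2 * s)%nat with (S (2 + 2 * s)) by lia.
    rewrite iter_S, Hd_even. reflexivity. }
  assert (Hcover : forall j, exists c, d <= c <= v /\ iter (2 * j) f c = d).
  { induction j. exists d; split; [lra|reflexivity].
    destruct IHj as [c' [Hc'1 Hc'2]].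
    destruct (ivt_on (iter 2 f) d v c' Hdv
      (cont_sub _ a b d v (Hci 2%nat) ltac:(lra) ltac:(lra))) as [c [Hc1 Hc2]].
    { right. rewrite Hd2, Hf2v. lra. }
    exists c; split; auto.
    replace (2 * S j)%nat with (2 * j + 2)%nat by lia.
    rewrite iter_add, Hc2. exact Hc'2. }
  assert (KEY1 : forall i j x0 x1, a <= x0 -> x0 <= x1 -> x1 <= b ->
     iter i f x0 < d -> v <= iter i f x1 ->
     exists y, x0 < y <= x1 /\ iter (2 * j + i) f y = d).
  { intros i j x0 x1 H1 H2 H3 H4 H5.
    destruct (Hcover j) as [c [Hc1 Hc2]].
    destruct (ivt_on (iter i f) x0 x1 c H2 (cont_sub _ a b x0 x1 (Hci i) H1 H3))
      as [y [Hy1 Hy2]].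
    { left. lra. }
    exists y. split.
    - split; [|lra]. destruct (Rle_lt_or_eq_dec _ _ (proj1 Hy1)) as [|Heq]; auto.
      subst y. lra.
    - rewrite iter_add, Hy2. exact Hc2. }
  assert (KEY2 : forall i j x0 x1, a <= x0 -> x0 <= x1 -> x1 <= b ->
     v <= iter i f x0 -> iter i f x1 < d ->
     exists y, x0 <= y < x1 /\ iter (2 * j + i) f y = d).
  { intros i j x0 x1 H1 H2 H3 H4 H5.
    destruct (Hcover j) as [c [Hc1 Hc2]].
    destruct (ivt_on (iter i f) x0 x1 c H2 (cont_sub _ a b x0 x1 (Hci i) H1 H3))
      as [y [Hy1 Hy2]].
    { right. lra. }
    exists y. split.
    - split; [lra|]. destruct (Rle_lt_or_eq_dec _ _ (proj2 Hy1)) as [|Heq]; auto.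
      subst y. lra.
    - rewrite iter_add, Hy2. exact Hc2. }
  destruct (Hmu' n) as [[[HA1 HA2] HA3] HAmax].
  destruct (Hmu' (S n)) as [[[HA'1 HA'2] HA'3] _].
  destruct (Hmu n k Hk) as [[[HB1 HB2] HB3] HBmin].
  apply Nat.odd_spec in Hmodd. destruct Hmodd as [r Hr].
  apply Nat.odd_spec in Hqodd. destruct Hqodd as [u Hu].
  assert (HA'lt : mu' (S n) < d).
  { destruct (Rle_lt_or_eq_dec _ _ HA'2) as [|Heq]; auto. exfalso.
    rewrite Heq in HA'3.
    replace (m + 2 * S n)%nat with (3 + 2 * (r + n))%nat in HA'3 by lia.
    rewrite Hd_odd in HA'3. lra. }
  assert (Hxd : x < d) by lra.
  apply Nat.nlt_ge. intro Hlt.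
  destruct Hq as [_ [Hqx _]].
  assert (Ht : exists s, (3 + 2 * s <= m + 2 * n + 2 * k)%nat /\
                        iter (3 + 2 * s) f x = x).
  { destruct u as [|u'].
    - exists 0%nat. split; [lia|]. subst q.
      change (f x = x) in Hqx. change (f (f (f x)) = x). rewrite !Hqx. reflexivity.
    - exists u'. split; [lia|]. replace (3 + 2 * u')%nat with q by lia. exact Hqx. }
  destruct Ht as [s [Hts Hxt]].
  set (t := (3 + 2 * s)%nat) in *.
  destruct (Nat.le_gt_cases t (m + 2 * n)) as [Hc|Hc].
  - destruct (KEY1 t (r + n - 1 - s)%nat x d ltac:(lra) ltac:(lra) ltac:(lra))
      as [y [Hy1 Hy2]].
    + rewrite Hxt. exact Hxd.
    + unfold t. rewrite Hd_odd. lra.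
    + replace (2 * (r + n - 1 - s) + t)%nat with (m + 2 * n)%nat in Hy2
        by (unfold t in *; lia).
      assert (y <= mu' n) by (apply HAmax; split; [lra|exact Hy2]). lra.
  - assert (HtA : iter t f (mu' n) = z0).
    { replace t with (2 + 2 * (s - r - n) + (m + 2 * n))%nat by (unfold t in *; lia).
      rewrite iter_add, HA3. apply Hd_even. }
    destruct (KEY2 t (k - 1 - (s - r - n))%nat (mu' n) x ltac:(lra) ltac:(lra) ltac:(lra))
      as [y [Hy1 Hy2]].
    + rewrite HtA. lra.
    + rewrite Hxt. exact Hxd.
    + replace (2 * (k - 1 - (s - r - n)) + t)%nat with (m + 2 * n + 2 * k)%nat in Hy2
        by (unfold t in *; lia).
      assert (mu n k <= y) by (apply HBmin; split; [lra|exact Hy2]). lra.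
Qed.
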